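(* Let $n \ge 1$ and $0 \le k < n$. There exists a comparison tournament $G$ on $n$ elements $x_1,\dots,x_n$ with the following property: for every set $S \subseteq \{x_1,\dots,x_n\}$ with $|S| < \min\{n, 2k+1\}$, there exists a choice of exactly $k$ corrupted elements that is valid for $G$ (i.e. $G$ restricted to the remaining $n-k$ uncorrupted elements is acyclic) and whose uncorrupted maximum does not lie in $S$. Consequently, any algorithm that always outputs a set containing the uncorrupted maximum must, on this instance, output a set of size at least $\min\{n, 2k+1\}$.
   Context: Model: there are $n$ elements $x_1,\dots,x_n$, exactly $k$ of which are corrupted (the algorithm does not know which). For every pair of distinct elements $x_u, x_v$ the comparison graph (a tournament) specifies that either $x_u$ is larger than $x_v$ or $x_v$ is larger than $x_u$. The comparison graph restricted to the $n-k$ uncorrupted elements is acyclic (a transitive tournament); comparisons involving corrupted elements may be oriented arbitrarily (possibly creating directed cycles). The uncorrupted maximum is the unique uncorrupted element larger than every other uncorrupted element. An algorithm knows $n$ and $k$, may query the orientation of any pair (a comparison query; answers are determined by the fixed comparison graph), and outputs a set of elements. *)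

(* Defs.v *)
From mathcomp Require Import all_boot.
Set Implicit Arguments. Unset Strict Implicit. Unset Printing Implicit Defensive.

(* Elements x_1..x_n are indexed by 'I_n.  G u v  means "x_u is larger than x_v". *)

Definition tournament (n : nat) (G : rel 'I_n) : Prop :=
  (forall u, ~~ G u u) /\
  (forall u v, u != v -> G u v (+) G v u).

Definition acyclic_on (n : nat) (G : rel 'I_n) (U : {set 'I_n}) : Prop :=
  forall s : seq 'I_n, s != [::] -> all (fun x => x \in U) s -> ~~ cycle G s.

Definition valid_corruption (n k : nat) (G : rel 'I_n) (C : {set 'I_n}) : Prop :=
  #|C| = k /\ acyclic_on G (~: C).

Definition uncorrupted_max (n : nat) (G : rel 'I_n) (C : {set 'I_n}) (m : 'I_n) : Prop :=
  m \in ~: C /\ (forall y, y \in ~: C -> y != m -> G m y).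

(* Main.v *)
Require Import Defs.
From mathcomp Require Import all_boot.
From mathcomp Require Import zify.

Set Implicit Arguments. Unset Strict Implicit. Unset Printing Implicit Defensive.

Definition dist (T u v : nat) := if u <= v then v - u else v + T - u.
Definition topr (T u v : nat) :=
  (0 < dist T u v) && ((2 * dist T u v < T) || ((2 * dist T u v == T) && (u < v))).
Definition Grel (n k : nat) : rel 'I_n := fun u v =>
  let T := minn n (2*k+1) in
  if (u < T) && (v < T) then topr T u v
  else if u < T then true else if v < T then false else v < u.

Lemma acyc_rank n (G : rel 'I_n) (U : {set 'I_n}) (r : 'I_n -> nat) :
  (forall u v, u \in U -> v \in U -> G u v -> r v < r u) -> acyclic_on G U.
Proof.
move=> H s sne /allP Hs.
have key : forall y p, y \in U -> all (fun x => x \in U) p -> path G y p ->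
    r (last y p) + (0 < size p) <= r y.
  move=> y p; elim: p y => [|z p IH] y /= Hy; first by rewrite addn0.
  move=> /andP [Hz Hp] /andP [Gyz Pz].
  have := IH z Hz Hp Pz; have := H _ _ Hy Hz Gyz.
  case: p {IH Hp Pz} => [|w p] /=; lia.
case: s sne Hs => [//|x s] _ Hs; apply/negP => Hc.
have Hx : x \in U by apply: Hs; rewrite inE eqxx.
have Hall : all (fun y => y \in U) (rcons s x).
  apply/allP => y; rewrite mem_rcons => Hy; exact: Hs.
have := key x (rcons s x) Hx Hall Hc.
rewrite last_rcons size_rcons /=; lia.
Qed.

Lemma extend (T : finType) (A B : {set T}) k :
  A \subset B -> #|A| <= k <= #|B| -> exists C : {set T},
    [/\ A \subset C, C \subset B & #|C| = k].
Proof.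
move=> AB; elim: k => [|k IH] /andP [H1 H2].
  by exists A; split => //; lia.
case: (eqVneq #|A| k.+1) => E; first by exists A; split.
have [C [AC CB Ck]] : exists C : {set T}, [/\ A \subset C, C \subset B & #|C| = k].
  apply: IH; apply/andP; split; lia.
have : ~~ (B \subset C).
  apply/negP => /subset_leq_card; lia.
case/subsetPn => x xB xC.
exists (x |: C); split.
- by apply: subset_trans AC (subsetUr _ _).
- by rewrite subUset sub1set xB.
- by rewrite cardsU1 xC Ck.
Qed.

Lemma topkey T h m u v : u < T -> v < T -> m < T -> 2 * h <= T - 1 ->
  dist T m u <= h -> dist T m v <= h -> topr T u v -> dist T m u < dist T m v.
Proof.
rewrite /topr /dist => uT vT mT hh.
case: (leqP m u) => mu; case: (leqP m v) => mv; case: (leqP u v) => uv /=; lia.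
Qed.

Theorem mainTheorem1 (n k : nat) (hn : 1 <= n) (hk : k < n) :
  exists G : rel 'I_n,
    tournament G /\
    forall S : {set 'I_n}, #|S| < minn n (2 * k + 1) ->
      exists C : {set 'I_n},
        valid_corruption k G C /\
        exists m : 'I_n, uncorrupted_max G C m /\ m \notin S.
Proof.
set T := minn n (2 * k + 1).
have TLn : T <= n by rewrite /T geq_minl.
have TLk : T <= 2 * k + 1 by rewrite /T geq_minr.
have TG : T = n \/ T = 2 * k + 1 by rewrite /T; lia.
exists (Grel k); split.
  split.
  - move=> u; rewrite /Grel -/T /topr /dist; have := ltn_ord u.
    repeat (case: ifP => ? /=); lia.
  - move=> u v; rewrite /Grel -/T /topr /dist => /eqP Huv.
    have Huv' : (u : nat) <> v by move=> E; apply: Huv; apply: val_inj.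
    have := ltn_ord u; have := ltn_ord v.
    repeat (case: ifP => ? /=); lia.
move=> S HS.
have [m [mT mS]] : exists m : 'I_n, m < T /\ m \notin S.
  pose w := fun j : 'I_T => widen_ord TLn j.
  have winj : injective w by move=> a b /(congr1 val) /= /val_inj.
  have : ~~ ([set w j | j in 'I_T] \subset S).
    apply/negP => /subset_leq_card; rewrite card_imset // card_ord; by rewrite leqNgt HS.
  case/subsetPn => x /imsetP [j _ ->] xS.
  by exists (w j); split => //=; exact: ltn_ord.
set h := (T - 1) %/ 2.
have h1 : 2 * h <= T - 1 by rewrite /h; lia.
have h2 : T - 1 <= 2 * h + 1 by rewrite /h; lia.
pose A := [set x : 'I_n | (x < T) && (h < dist T m x)].
have AB : A \subset [set~ m].
  apply/subsetP => x; rewrite !inE /dist => /andP [_]; apply: contraL => /eqP ->.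
  rewrite leqnn subnn; lia.
have Ak : #|A| <= k.
  pose c := T - 1 - h.
  pose g := fun j : 'I_c => insubd m (let t := m + h + 1 + j in if t < T then t else t - T) : 'I_n.
  have : A \subset [set g j | j in 'I_c].
    apply/subsetP => x; rewrite inE => /andP [xT hx].
    have Hj : dist T m x - h - 1 < c by move: hx; rewrite /c /dist; case: ifP; lia.
    apply/imsetP; exists (Ordinal Hj) => //; apply/val_inj.
    rewrite /g val_insubd /=; move: hx; rewrite /dist.
    have := ltn_ord x; case: (leqP m x) => mx /= hx xn; set t := (m + h + 1 + _)%N; case: (ltnP t T) => tT /=; rewrite /t in tT *; repeat (case: ifP => ? /=); lia.
  move/subset_leq_card => H; apply: leq_trans H _.
  apply: leq_trans (leq_imset_card _ _) _; rewrite card_ord /c; lia.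
have [C [AC CB Ck]] : exists C : {set 'I_n},
    [/\ A \subset C, C \subset [set~ m] & #|C| = k].
  apply: extend => //; rewrite cardsC1 card_ord Ak /=; lia.
have notA : forall x, x \in ~: C -> x < T -> dist T m x <= h.
  move=> x; rewrite inE => xC xT; rewrite leqNgt; apply/negP => Hx; move/negP: xC; apply.
  by apply: (subsetP AC); rewrite inE xT Hx.
exists C; split.
  split => //.
  apply: (@acyc_rank _ _ _ (fun x : 'I_n => if x < T then n + h - dist T m x else x)).
  move=> u v Hu Hv; rewrite /Grel -/T /=.
  have := ltn_ord u; have := ltn_ord v.
  case: (ltnP u T) => uT; case: (ltnP v T) => vT //= vn un.
  - move=> Huv; have := topkey uT vT mT h1 (notA _ Hu uT) (notA _ Hv vT) Huv.
    have := notA _ Hu uT; lia.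
  - move=> _; have := notA _ Hu uT; lia.
exists m; split => //; split.
  rewrite inE; apply/negP => /(subsetP CB); by rewrite !inE eqxx.
move=> y Hy /eqP ym.
have ym' : (y : nat) <> m by move=> E; apply: ym; apply: val_inj.
rewrite /Grel -/T /= mT /=; case: (ltnP y T) => yT //=.
have := notA _ Hy yT; rewrite /topr /dist.
case: (leqP m y) => my /=; lia.
Qed.
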